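(* Let $H=([t],E)$ be a hypergraph on vertex set $[t]=\{1,\dots,t\}$ in which every edge $e\in E$ is a subset of $[t]$ with $2\le |e|$, and let $d$ be the maximal edge size. Let $f:\{0,1\}^n\to\{-1,1\}$. Consider the test: choose $x_1,\dots,x_t\in\{0,1\}^n$ independently and uniformly at random, and accept iff for every $e\in E$, $$\prod_{i\in e} f(x_i)\cdot f\Big(\sum_{i\in e}x_i\Big)=f(0)^{|e|+1}.$$ Then the probability that this test accepts $f$ is at most $\frac{1}{2^{|E|}}+\|f\|_{U_d}$.
   Context: $\{0,1\}^n$ is identified with $\mathbb F_2^n$ (addition coordinatewise mod 2). For $f:\{0,1\}^n\to\mathbb R$ and integer $d\ge1$, the $d$-th Gowers uniformity norm is $$\|f\|_{U_d}=\Big[\mathbb E_{x,y_1,\dots,y_d}\prod_{S\subseteq[d]} f\Big(x+\sum_{i\in S}y_i\Big)\Big]^{1/2^d},$$ with $x,y_1,\dots,y_d$ independent and uniform in $\{0,1\}^n$. *)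

(* Defs.v *)
From HB Require Import structures.
From mathcomp Require Import all_boot all_order all_algebra.
From mathcomp Require Import reals exp.
Set Implicit Arguments. Unset Strict Implicit. Unset Printing Implicit Defensive.
Import Order.TTheory GRing.Theory Num.Theory.
Local Open Scope ring_scope.

(* {0,1}^n identified with F_2^n, represented as row vectors 'rV['F_2]_n. *)
Notation cube n := 'rV['F_2]_n.

Definition gowers_inner (R : realType) (n d : nat) (f : cube n -> R) : R :=
  ((#|{: cube n}| ^ d.+1)%:R)^-1 *
  \sum_(x : cube n) \sum_(y : {ffun 'I_d -> cube n})
     \prod_(S : {set 'I_d}) f (x + \sum_(i in S) y i).

Definition gowers_norm (R : realType) (n d : nat) (f : cube n -> R) : R :=
  powR (gowers_inner d f) ((2 ^+ d)^-1).

Definition hyper_test_accepts (R : realType) (n t : nat) (E : {set {set 'I_t}})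
  (f : cube n -> R) (x : {ffun 'I_t -> cube n}) : bool :=
  [forall e in E,
     (\prod_(i in e) f (x i)) * f (\sum_(i in e) x i) == f 0 ^+ (#|e|.+1)].

Definition hyper_test_prob (R : realType) (n t : nat) (E : {set {set 'I_t}})
  (f : cube n -> R) : R :=
  (#|[set x : {ffun 'I_t -> cube n} | hyper_test_accepts E f x]|%:R)
  / (#|{: {ffun 'I_t -> cube n}}|%:R).

(* Main.v *)
Require Import Defs.
From HB Require Import structures.
From mathcomp Require Import all_boot all_order all_algebra.
From mathcomp Require Import reals exp.
From mathcomp Require Import ring lra.
Set Implicit Arguments. Unset Strict Implicit. Unset Printing Implicit Defensive.
Import Order.TTheory GRing.Theory Num.Theory.
Local Open Scope ring_scope.
Import Order.TTheory GRing.Theory Num.Theory.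
Local Open Scope ring_scope.

Definition avg {R : realType} {T : finType} (F : T -> R) : R :=
  (#|T|%:R)^-1 * \sum_(x : T) F x.

Lemma avg_ext (R : realType) (T : finType) (F G : T -> R) :
  (forall x, F x = G x) -> avg F = avg G.
Proof. by move=> h; rewrite /avg; congr (_ * _); apply: eq_bigr. Qed.

Lemma avg_le (R : realType) (T : finType) (F G : T -> R) :
  (forall x, F x <= G x) -> avg F <= avg G.
Proof.
move=> h; rewrite /avg ler_wpM2l ?invr_ge0 ?ler0n //.
by apply: ler_sum => x _; apply: h.
Qed.

Lemma avg_const (R : realType) (T : finType) (x0 : T) (c : R) :
  avg (fun _ : T => c) = c.
Proof.
rewrite /avg sumr_const; change #|xpredT| with #|T|.
rewrite -(mulr_natl c) mulrA mulVf ?mul1r //.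
by rewrite pnatr_eq0 -lt0n; apply/card_gt0P; exists x0.
Qed.

Lemma avgZ (R : realType) (T : finType) (c : R) (F : T -> R) :
  avg (fun x => c * F x) = c * avg F.
Proof. by rewrite /avg -mulr_sumr mulrCA. Qed.

Lemma avgZr (R : realType) (T : finType) (c : R) (F : T -> R) :
  avg (fun x => F x * c) = avg F * c.
Proof. by rewrite /avg -mulr_suml mulrA. Qed.

Lemma avgD (R : realType) (T : finType) (F G : T -> R) :
  avg (fun x => F x + G x) = avg F + avg G.
Proof. by rewrite /avg big_split mulrDr. Qed.

Lemma avgN (R : realType) (T : finType) (F : T -> R) :
  avg (fun x => - F x) = - avg F.
Proof. by rewrite /avg sumrN mulrN. Qed.

Lemma avg_swap (R : realType) (T U : finType) (F : T -> U -> R) :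
  avg (fun x => avg (fun y => F x y)) = avg (fun y => avg (fun x => F x y)).
Proof.
rewrite /avg -!mulr_sumr !mulrA [X in X * _ = _]mulrC; congr (_ * _).
exact: exchange_big.
Qed.

Lemma avg_reindex (R : realType) (T : finType) (h : T -> T) (F : T -> R) :
  injective h -> avg F = avg (fun x => F (h x)).
Proof. by move=> ih; rewrite /avg (reindex_inj ih). Qed.

Lemma avg_transl (R : realType) (T : finZmodType) (w : T) (F : T -> R) :
  avg F = avg (fun x => F (x + w)).
Proof. by apply: avg_reindex; apply: addIr. Qed.

Lemma avg_sq (R : realType) (T : finType) (x0 : T) (F : T -> R) :
  avg F ^+ 2 <= avg (fun x => F x ^+ 2).
Proof.
set m := avg F.
have h0 : 0 <= avg (fun x => (F x - m) ^+ 2).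
  rewrite /avg mulr_ge0 ?invr_ge0 ?ler0n //.
  by apply: sumr_ge0 => x _; apply: sqr_ge0.
have e : avg (fun x => (F x - m) ^+ 2) = avg (fun x => F x ^+ 2) - m ^+ 2.
  rewrite (avg_ext (G := fun x => F x ^+ 2 + (- ((2 * m) * F x) + m ^+ 2))); last first.
    by move=> x; rewrite sqrrB; ring.
  rewrite avgD avgD avgN avgZ (avg_const x0) -/m; ring.
by rewrite -subr_ge0 -e.
Qed.

Lemma avg_pow2 (R : realType) (T : finType) (x0 : T) (m : nat) (F : T -> R) :
  avg F ^+ (2 ^ m) <= avg (fun x => F x ^+ (2 ^ m)).
Proof.
elim: m F => [|m IH] F; first by rewrite !expn0 !expr1 (avg_ext (G := F)).
rewrite [in X in _ <= X](avg_ext (G := fun x => (F x ^+ 2) ^+ (2 ^ m))); last first.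
  by move=> x; rewrite expnS exprM.
rewrite expnS exprM.
apply: le_trans (IH (fun x => F x ^+ 2)).
rewrite lerXn2r ?nnegrE ?sqr_ge0 ?(avg_sq x0) //.
by rewrite /avg mulr_ge0 ?invr_ge0 ?ler0n // sumr_ge0 // => x _; apply: sqr_ge0.
Qed.
Definition dlt {R : realType} {V : finZmodType} (g : V -> R) (h : V) : V -> R :=
  fun s => g s * g (s + h).

Fixpoint beta {R : realType} {V : finZmodType} (k : nat) (g : V -> R) : R :=
  match k with
  | 0 => avg g
  | k.+1 => avg (fun h => beta k (dlt g h))
  end.

Lemma beta_ext (R : realType) (V : finZmodType) k (g g' : V -> R) :
  (forall s, g s = g' s) -> beta k g = beta k g'.
Proof.
elim: k g g' => [|k IH] g g' e /=; first exact: avg_ext.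
apply: avg_ext => h; apply: IH => s; by rewrite /dlt !e.
Qed.

Lemma beta_mono (R : realType) (V : finZmodType) k (g : V -> R) :
  beta k g ^+ 2 <= beta k.+1 g.
Proof.
elim: k g => [|k IH] g.
  have -> : beta 1 g = avg g * avg g.
    rewrite /= /dlt avg_swap -avgZr; apply: avg_ext => s.
    rewrite -avgZ (avg_transl s (fun x => g s * g x)).
    by apply: avg_ext => h; rewrite addrC.
  by rewrite expr2.
rewrite [beta k.+1 g]/=.
apply: le_trans (avg_sq 0 _) _.
apply: le_trans (avg_le (fun h => IH (dlt g h))) _.
rewrite [X in _ <= X]/= avg_swap.
apply: avg_le => h /=; apply: le_refl.
Qed.
Lemma beta_ge0 (R : realType) (V : finZmodType) k (g : V -> R) : 0 <= beta k.+1 g.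
Proof. exact: le_trans (sqr_ge0 _) (beta_mono k g). Qed.

Lemma prod_powerset_split (R : realType) (T : finType) (A : {set T}) (a : T)
  (F : {set T} -> R) : a \in A ->
  \prod_(S in powerset A) F S = \prod_(S in powerset (A :\ a)) (F S * F (a |: S)).
Proof.
move=> aA; rewrite big_split /= [LHS](bigID (fun S : {set T} => a \in S)) /= mulrC; congr (_ * _).
  apply: eq_bigl => S; by rewrite !powersetE subsetD1.
rewrite (reindex_onto (fun S => a |: S) (fun S => S :\ a)) /=; last first.
  by move=> S /andP[_ aS]; rewrite setD1K.
apply: eq_bigl => S; rewrite !powersetE subsetD1 setU11 subUset sub1set aA /= andbT.
congr (_ && _); apply/eqP/idP => [<-|aS]; first by rewrite !inE eqxx.
exact: setU1K.
Qed.
Definition dl {I : finType} {V : finZmodType} (a : I) (h : V) : {ffun I -> V} :=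
  [ffun i => if i == a then h else 0].

Lemma addfE (I : finType) (V : finZmodType) (x y : {ffun I -> V}) i :
  (x + y) i = x i + y i.
Proof. by rewrite ffunE. Qed.

Lemma dlE (I : finType) (V : finZmodType) (a : I) (h : V) i :
  dl a h i = if i == a then h else 0.
Proof. by rewrite ffunE. Qed.

Lemma avg_translX (R : realType) (I : finType) (V : finZmodType)
  (w : {ffun I -> V}) (F : {ffun I -> V} -> R) :
  avg F = avg (fun x : {ffun I -> V} => F (x + w)).
Proof. by apply: avg_reindex; apply: addIr. Qed.

Lemma avg_resample (R : realType) (I : finType) (V : finZmodType) (a : I)
  (M : {ffun I -> V} -> R) :
  avg M = avg (fun x : {ffun I -> V} => avg (fun h : V => M (x + dl a (h - x a)))).
Proof.
transitivity (avg (fun u : V => avg (fun x : {ffun I -> V} => M (x + dl a u)))).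
  by rewrite -{1}(avg_const (0 : V) (avg M)); apply: avg_ext => u; exact: avg_translX.
rewrite avg_swap; apply: avg_ext => x.
by rewrite (avg_transl (- x a)).
Qed.

Definition Box {R : realType} {I : finType} {V : finZmodType} (A : {set I}) (g : V -> R) : R :=
  avg (fun s : V => avg (fun y : {ffun I -> V} =>
    \prod_(S in powerset A) g (s + \sum_(i in S) y i))).

Lemma box_beta (R : realType) (I : finType) (V : finZmodType) k :
  forall (A : {set I}) (g : V -> R), #|A| = k -> Box A g = beta k g.
Proof.
elim: k => [|k IH] A g hA.
  move/eqP: hA; rewrite cards_eq0 => /eqP ->.
  rewrite /Box /= powerset0; apply: avg_ext => s.
  rewrite -[RHS](avg_const (0 : {ffun I -> V}) (g s)); apply: avg_ext => y.
  by rewrite big_set1 big_set0 addr0.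
have : (0 < #|A|)%N by rewrite hA.
case/card_gt0P => a aA.
have hA' : #|A :\ a| = k by move: hA; rewrite (cardsD1 a A) aA add1n => -[].
pose Q (s : V) (h : V) (y : {ffun I -> V}) :=
  \prod_(S in powerset (A :\ a)) dlt g h (s + \sum_(i in S) y i).
have e1 : forall s, avg (fun y : {ffun I -> V} =>
    \prod_(S in powerset A) g (s + \sum_(i in S) y i)) =
    avg (fun h => avg (fun y => Q s h y)).
  move=> s; rewrite -avg_swap (avg_resample a); apply: avg_ext => y.
  apply: avg_ext => h; rewrite /Q (prod_powerset_split _ aA).
  apply: eq_bigr => S; rewrite powersetE subsetD1 => /andP[_ aS].
  rewrite /dlt big_setU1 //= addfE dlE eqxx [y a + _]addrC subrK.
  have es : \sum_(i in S) (y + dl a (h - y a)) i = \sum_(i in S) y i.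
    apply: eq_bigr => i iS; rewrite addfE dlE.
    by case: eqP => [ei|_]; [rewrite -ei iS in aS | rewrite addr0].
  by rewrite es [h + _]addrC addrA.
rewrite /Box (avg_ext e1) avg_swap /=; apply: avg_ext => h.
by rewrite -(IH (A :\ a) (dlt g h) hA').
Qed.
Definition miss {R : realType} {I : finType} {V : finZmodType} (a : I)
  (phi : {ffun I -> V} -> R) := forall x u, phi (x + dl a u) = phi x.

Lemma dlD (I : finType) (V : finZmodType) (a : I) (u v : V) :
  dl a (u + v) = dl a u + dl a v :> {ffun I -> V}.
Proof. by apply/ffunP => i; rewrite addfE !dlE; case: eqP; rewrite ?addr0. Qed.

Lemma add_dl2 (I : finType) (V : finZmodType) (a : I) (x : {ffun I -> V}) (u v : V) :
  x + dl a u + dl a v = x + dl a (u + v).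
Proof. by rewrite dlD addrA. Qed.

Lemma sum_dl_in (I : finType) (V : finZmodType) (B : {set I}) (a : I)
  (x : {ffun I -> V}) (u : V) : a \in B ->
  \sum_(i in B) (x + dl a u) i = \sum_(i in B) x i + u.
Proof.
move=> aB; rewrite (eq_bigr (fun i => x i + dl a u i)) => [|i _]; last exact: addfE.
rewrite big_split /=; congr (_ + _).
rewrite (bigD1 a) //= dlE eqxx big1 ?addr0 // => i /andP[_ /negbTE ia].
by rewrite dlE ia.
Qed.

Lemma gvn (R : realType) (I : finType) (V : finZmodType) (B : {set I}) (b0 : I)
  (hb0 : b0 \in B) k :
  forall (A : {set I}) (g : V -> R) (c : V) (phi : I -> {ffun I -> V} -> R),
  #|A| = k -> A \subset B -> (forall a, a \in A -> miss a (phi a)) ->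
  (forall a x, `|phi a x| <= 1) ->
  avg (fun x : {ffun I -> V} => g (c + \sum_(i in B) x i) * \prod_(a in A) phi a x)
    ^+ (2 ^ k) <= beta k g.
Proof.
elim: k => [|k IH] A g c phi hA AB hmiss hphi.
  move/eqP: hA; rewrite cards_eq0 => /eqP ->.
  rewrite expn0 expr1 /= (avg_resample b0) le_eqVlt; apply/orP; left; apply/eqP.
  rewrite -[RHS](avg_const (0 : {ffun I -> V}) (avg g)); apply: avg_ext => x.
  rewrite (avg_transl (c + \sum_(i in B) x i - x b0) g); apply: avg_ext => h.
  rewrite big_set0 mulr1 sum_dl_in //; congr (g _).
  by rewrite [RHS]addrC -!addrA [- x b0 + h]addrC.
have : (0 < #|A|)%N by rewrite hA.
case/card_gt0P => a aA.
have hA' : #|A :\ a| = k by move: hA; rewrite (cardsD1 a A) aA add1n => -[].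
have aB : a \in B by apply: (subsetP AB).
have A'B : A :\ a \subset B by apply: subset_trans AB; apply: subsetDl.
pose K (x : {ffun I -> V}) := g (c + \sum_(i in B) x i) * \prod_(a' in A :\ a) phi a' x.
pose L (x : {ffun I -> V}) := avg (fun h : V => K (x + dl a (h - x a))).
pose phi' (u : V) (a' : I) (x : {ffun I -> V}) := phi a' x * phi a' (x + dl a u).
pose T' (u : V) := avg (fun x : {ffun I -> V} =>
   dlt g u (c + \sum_(i in B) x i) * \prod_(a' in A :\ a) phi' u a' x).
set T := avg _.
have eT : T = avg (fun x => phi a x * L x).
  rewrite /T (avg_resample a); apply: avg_ext => x.
  rewrite /L -avgZ; apply: avg_ext => h.
  rewrite [\prod_(_ in A) _](big_setD1 a) //= (hmiss a aA) /K /=; ring.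
have e2 : avg (fun x => L x ^+ 2) = avg T'.
  have eL : forall x, L x ^+ 2 = avg (fun h : V => avg (fun h' : V =>
      K (x + dl a (h - x a)) * K (x + dl a (h' - x a)))).
    move=> x; rewrite expr2 {1}/L -avgZr; apply: avg_ext => h.
    by rewrite /L -avgZ.
  rewrite (avg_ext eL).
  have eT' : forall u, T' u = avg (fun x : {ffun I -> V} => avg (fun h : V =>
      K (x + dl a (h - x a)) * K (x + dl a (h - x a) + dl a u))).
    move=> u; rewrite /T' (avg_resample a); apply: avg_ext => x.
    apply: avg_ext => h; set y := x + dl a (h - x a).
    rewrite /K /dlt /phi' big_split /= [\sum_(i in B) (y + _) i]sum_dl_in // [c + (_ + u)]addrA; ring.
  rewrite (avg_ext eT') [RHS]avg_swap; apply: avg_ext => x.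
  rewrite [RHS]avg_swap; apply: avg_ext => h.
  rewrite [RHS](avg_transl (- h)); apply: avg_ext => u.
  by rewrite add_dl2 [h - x a + _]addrC -addrA addKr.
have hT2 : T ^+ 2 <= avg T'.
  rewrite -e2 eT; apply: le_trans (avg_sq (0 : {ffun I -> V}) _) _; apply: avg_le => x.
  have h1 : phi a x ^+ 2 <= 1.
    by have := hphi a x; rewrite ler_norml => /andP[p1 p2]; nra.
  rewrite exprMn; have := sqr_ge0 (L x); nra.
rewrite expnS exprM.
apply: (@le_trans _ _ (avg T' ^+ (2 ^ k))).
  by rewrite lerXn2r ?nnegrE ?sqr_ge0 // (le_trans (sqr_ge0 T) hT2).
apply: le_trans (avg_pow2 (0 : V) k T') _.
rewrite /=; apply: avg_le => u.
apply: IH => //.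
- move=> a' a'A x v.
  have a'A2 : a' \in A by move: a'A; rewrite in_setD1 => /andP[].
  by rewrite /phi' (addrAC x) !(hmiss a' a'A2).
- move=> a' x; rewrite /phi' normrM mulr_ile1 ?normr_ge0 //.
Qed.
Lemma powR_root (R : realType) (b : R) (m : nat) : 0 <= b ->
  powR b ((2 ^+ m)^-1) ^+ (2 ^ m) = b.
Proof.
move=> b0; rewrite -powR_mulrn ?powR_ge0 // -powRrM natrX mulVf ?powRr1 //.
by rewrite expf_neq0 // pnatr_eq0.
Qed.

Lemma root_bound (R : realType) (T b : R) (m : nat) :
  T ^+ (2 ^ m.+1) <= b -> `|T| <= powR b ((2 ^+ m.+1)^-1).
Proof.
move=> hT.
have hT0 : 0 <= T ^+ (2 ^ m.+1) by rewrite expnS exprM exprn_ge0 // sqr_ge0.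
have b0 : 0 <= b := le_trans hT0 hT.
rewrite -(ler_pXn2r (n := 2 ^ m.+1)) ?expn_gt0 // ?nnegrE ?powR_ge0 ?normr_ge0 //.
by rewrite powR_root // -normrX ger0_norm.
Qed.

Lemma beta_root_mono (R : realType) (V : finZmodType) (g : V -> R) k d :
  (k <= d)%N ->
  powR (beta k.+1 g) ((2 ^+ k.+1)^-1) <= powR (beta d.+1 g) ((2 ^+ d.+1)^-1).
Proof.
elim: d => [|d IH]; first by rewrite leqn0 => /eqP ->.
rewrite leq_eqVlt => /orP[/eqP -> //|]; rewrite ltnS => /IH h.
apply: le_trans h _.
set y := powR _ _.
have y0 : 0 <= y by apply: powR_ge0.
rewrite -(ger0_norm y0); apply: root_bound.
rewrite expnS mulnC exprM /y powR_root ?beta_ge0 //.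
exact: beta_mono.
Qed.

Lemma gowers_beta (R : realType) (n d : nat) (f : 'rV['F_2]_n -> R) :
  gowers_inner d f = beta d f.
Proof.
rewrite -(box_beta (I := 'I_d) (A := setT) f); last by rewrite cardsT card_ord.
rewrite /gowers_inner /Box /avg card_ffun card_ord.
rewrite natrX exprS invfM -mulrA mulr_sumr; congr (_ * _).
rewrite -natrX; apply: eq_bigr => x _; congr (_ * _).
rewrite powersetT; apply: eq_bigr => y _; apply: eq_bigl => S; by rewrite in_setT.
Qed.

Definition cf {R : realType} {n t : nat} (f : 'rV['F_2]_n -> R) (e : {set 'I_t})
  (x : {ffun 'I_t -> 'rV['F_2]_n}) : R :=
  f 0 ^+ #|e|.+1 * ((\prod_(i in e) f (x i)) * f (\sum_(i in e) x i)).

Lemma pm1_norm (R : realType) (r : R) : r = 1 \/ r = -1 -> `|r| = 1.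
Proof. by case=> ->; rewrite ?normrN normr1. Qed.

Lemma pm1_sq (R : realType) (r : R) : r = 1 \/ r = -1 -> r ^+ 2 = 1.
Proof. by case=> ->; rewrite ?sqrrN expr1n. Qed.

Lemma sq1_pm1 (R : realType) (r : R) : r ^+ 2 = 1 -> r = 1 \/ r = -1.
Proof. by move/eqP; rewrite sqrf_eq1 => /orP[/eqP|/eqP]; [left|right]. Qed.

Lemma cf_sq (R : realType) n t (f : 'rV['F_2]_n -> R)
  (hf : forall x, f x = 1 \/ f x = -1) (e : {set 'I_t}) (x : {ffun 'I_t -> 'rV['F_2]_n}) : cf f e x ^+ 2 = 1 :> R.
Proof.
rewrite /cf !exprMn -prodrXl -exprM mulnC exprM !pm1_sq // expr1n mul1r.
by rewrite big1 ?mul1r // => i _; apply: pm1_sq.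
Qed.

Lemma cf_norm (R : realType) n t (f : 'rV['F_2]_n -> R)
  (hf : forall x, f x = 1 \/ f x = -1) (e : {set 'I_t}) (x : {ffun 'I_t -> 'rV['F_2]_n}) : `|cf f e x| = 1 :> R.
Proof. by apply: pm1_norm; apply: sq1_pm1; apply: cf_sq. Qed.

Lemma cf_local (R : realType) n t (f : 'rV['F_2]_n -> R) (e : {set 'I_t})
  (x x' : {ffun 'I_t -> 'rV['F_2]_n}) :
  (forall i, i \in e -> x' i = x i) -> cf f e x' = cf f e x :> R.
Proof.
move=> h; rewrite /cf (eq_bigr (fun i => f (x i))) => [|i ie]; last by rewrite h.
by congr (_ * (_ * f _)); apply: eq_bigr => i ie; rewrite h.
Qed.

Lemma key (R : realType) (n t : nat) (E : {set {set 'I_t}})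
  (f : 'rV['F_2]_n -> R)
  (hE : forall e, e \in E -> (2 <= #|e|)%N)
  (hf : forall x, f x = 1 \/ f x = -1) (J : {set {set 'I_t}}) :
  J \subset E -> J != set0 ->
  `|avg (fun x : {ffun 'I_t -> 'rV['F_2]_n} => \prod_(e in J) cf f e x)|
    <= gowers_norm (\max_(e in E) #|e|) f.
Proof.
move=> JE /set0Pn [e1 e1J].
have [e0 e0J e0max] := arg_maxnP (P := fun e => e \in J) (fun e : {set 'I_t} => #|e|) e1J.
have e0E : e0 \in E by apply: (subsetP JE).
have hk := hE e0 e0E.
have kd : (#|e0| <= \max_(e in E) #|e|)%N := @leq_bigmax_cond _ (fun e => e \in E) (fun e : {set 'I_t} => #|e|) e0 e0E.
have [a0 a0e0] : exists a0, a0 \in e0.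
  by apply/card_gt0P; apply: leq_trans hk.
pose oth (i : 'I_t) := odflt i [pick j in e0 :\ i].
have oth_in : forall i, i \in e0 -> oth i \in e0 /\ oth i != i.
  move=> i ie; rewrite /oth; case: pickP => [j /setD1P[ne je] //|none].
  have : (0 < #|e0 :\ i|)%N.
    by move: hk; rewrite (cardsD1 i e0) ie add1n ltnS.
  by case/card_gt0P => j; rewrite none.
pose mm (e : {set 'I_t}) := odflt a0 [pick j in e0 :\: e].
have mm_in : forall e, e \in J -> e != e0 -> mm e \in e0 /\ mm e \notin e.
  move=> e eJ ne; rewrite /mm; case: pickP => [j /setDP[je0 jne] //|none].
  have : e0 :\: e == set0 by apply/eqP/setP => j; rewrite none inE.
  rewrite setD_eq0 => sub.
  have : e0 == e by rewrite eqEcard sub /=; apply: e0max.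
  by rewrite eq_sym (negbTE ne).
pose phi (a : 'I_t) (x : {ffun 'I_t -> 'rV['F_2]_n}) :=
  (\prod_(i in e0 | oth i == a) f (x i)) *
  \prod_(e in J :\ e0 | mm e == a) cf f e x.
have eqn : forall x, \prod_(e in J) cf f e x =
    f 0 ^+ #|e0|.+1 * (f (0 + \sum_(i in e0) x i) * \prod_(a in e0) phi a x).
  move=> x.
  have h1 : \prod_(i in e0) f (x i) = \prod_(a in e0) \prod_(i in e0 | oth i == a) f (x i).
    by apply: (partition_big oth (fun j => j \in e0)) => i /oth_in[].
  have h2 : \prod_(e in J :\ e0) cf f e x =
      \prod_(a in e0) \prod_(e in J :\ e0 | mm e == a) cf f e x.
    apply: (partition_big mm (fun j => j \in e0)).
    by move=> e /setD1P[ne eJ]; case: (mm_in e eJ ne).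
  have h3 : \prod_(a in e0) phi a x = (\prod_(a in e0) \prod_(i in e0 | oth i == a) f (x i)) *
      \prod_(a in e0) \prod_(e in J :\ e0 | mm e == a) cf f e x.
    by rewrite -big_split.
  rewrite (big_setD1 e0) //= h3 -h1 -h2 /cf add0r; ring.
have hmiss : forall a, a \in e0 -> miss a (phi a).
  move=> a ae0 x u; rewrite /phi; congr (_ * _).
    apply: eq_bigr => i /andP[ie0 /eqP oi].
    have [_ ne] := oth_in i ie0.
    rewrite addfE dlE; case: eqP => [ia|_]; last by rewrite addr0.
    by move: ne; rewrite oi ia eqxx.
  apply: eq_bigr => e /andP[/setD1P[ne eJ] /eqP me].
  have [_ nie] := mm_in e eJ ne.
  apply: cf_local => i ie; rewrite addfE dlE; case: eqP => [ia|_]; last by rewrite addr0.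
  by move: nie; rewrite me -ia ie.
have hphi : forall a x, `|phi a x| <= 1.
  move=> a x; rewrite /phi normrM !normr_prod.
  rewrite big1 => [|i _]; last exact: pm1_norm.
  rewrite big1 => [|e _]; last exact: cf_norm.
  by rewrite mulr1.
have [k hk'] : exists k, #|e0| = k.+1 by exists #|e0|.-1; rewrite prednK // ltnW.
have [d hd] : exists d, \max_(e in E) #|e| = d.+1.
  by exists (\max_(e in E) #|e|).-1; rewrite prednK // (leq_trans _ kd) // ltnW.
have hgvn := gvn a0e0 (A := e0) (phi := phi) f 0 hk' (subxx e0) hmiss hphi.
rewrite (avg_ext eqn) avgZ normrM normrX (pm1_norm (hf 0)) expr1n mul1r.
apply: le_trans (root_bound hgvn) _.
rewrite hd /gowers_norm gowers_beta.
by apply: beta_root_mono; rewrite -ltnS -hd -hk'.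
Qed.

Lemma natexp2 (m : nat) : (2 ^+ m)%R = (2 ^ m)%N.
Proof. by elim: m => // m IH; rewrite exprS expnS IH. Qed.

Lemma acc_edge (R : realType) n t (f : 'rV['F_2]_n -> R)
  (hf : forall x, f x = 1 \/ f x = -1) (e : {set 'I_t}) (x : {ffun 'I_t -> 'rV['F_2]_n}) :
  ((\prod_(i in e) f (x i)) * f (\sum_(i in e) x i) == f 0 ^+ #|e|.+1) = (cf f e x == 1).
Proof.
have hF : (f 0 ^+ #|e|.+1) ^+ 2 = 1 by rewrite -exprM mulnC exprM pm1_sq // expr1n.
rewrite /cf; set P := _ * _; set F := f 0 ^+ _.
apply/eqP/eqP => [->|h]; first by rewrite -expr2.
by rewrite -[P]mul1r -hF expr2 -mulrA h mulr1.
Qed.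

Lemma indicator (R : realType) n t (E : {set {set 'I_t}}) (f : 'rV['F_2]_n -> R)
  (hf : forall x, f x = 1 \/ f x = -1) (x : {ffun 'I_t -> 'rV['F_2]_n}) :
  (if hyper_test_accepts E f x then 1 else 0) = \prod_(e in E) ((1 + cf f e x) / 2) :> R.
Proof.
have e2 : (2 : R) != 0 by rewrite pnatr_eq0.
case: (boolP (hyper_test_accepts E f x)) => [/forall_inP H|/forall_inPn [e eE hne]].
  rewrite big1 // => e eE; move: (H e eE); rewrite acc_edge // => /eqP ->.
  by rewrite mulfV.
rewrite (big_setD1 e eE) /=.
move: hne; rewrite acc_edge // => hne.
have : cf f e x = -1.
  by case: (sq1_pm1 (cf_sq hf e x)) => // h; rewrite h eqxx in hne.
by move=> ->; rewrite addrN mul0r mul0r.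
Qed.

Lemma expand (R : realType) (T : finType) (E : {set T}) (c : T -> R) :
  \prod_(e in E) ((1 + c e) / 2) =
  ((2 ^+ #|E|)%:R)^-1 * \sum_(J : {set T})
     \prod_(e : T) (if e \in J then (if e \in E then c e else 0) else 1).
Proof.
rewrite big_split /= prodr_const natexp2 natrX -exprVn mulrC; congr (_ * _).
rewrite big_mkcond /= -bigA_distr; apply: eq_bigr => e _.
by case: (e \in E) => /=; [rewrite addrC | rewrite add0r].
Qed.

Lemma avg_sum (R : realType) (T U : finType) (F : U -> T -> R) :
  avg (fun x => \sum_(j : U) F j x) = \sum_(j : U) avg (F j).
Proof. by rewrite /avg exchange_big mulr_sumr. Qed.

Unset Implicit Arguments.

Theorem theorem2p2 (R : realType) (n t : nat) (E : {set {set 'I_t}})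
  (f : 'rV['F_2]_n -> R)
  (hE0 : E != set0)
  (hE : forall e, e \in E -> (2 <= #|e|)%N)
  (hf : forall x, f x = 1 \/ f x = -1) :
  hyper_test_prob E f <=
    ((2 ^+ #|E|)%:R)^-1 + gowers_norm (\max_(e in E) #|e|) f.
Proof.
set U := gowers_norm _ f.
have U0 : 0 <= U by apply: powR_ge0.
pose term (J : {set {set 'I_t}}) (x : {ffun 'I_t -> 'rV['F_2]_n}) : R :=
  \prod_(e : {set 'I_t}) (if e \in J then (if e \in E then cf f e x else 0) else 1).
set P : R := ((2 ^+ #|E|)%:R).
have P0 : 0 < P by rewrite /P ltr0n natexp2 expn_gt0.
have hprob : hyper_test_prob E f = P^-1 * \sum_(J : {set {set 'I_t}}) avg (term J).
  rewrite /hyper_test_prob -sum1_card natr_sum big_mkcond /=.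
  rewrite -avg_sum -avgZ mulrC /avg; congr (_ * _); apply: eq_bigr => x _.
  by rewrite inE indicator // expand.
pose b (J : {set {set 'I_t}}) : R :=
  if J == set0 then 1 else if J \subset E then U else 0.
have hb : forall J, avg (term J) <= b J.
  move=> J; rewrite /b; case: eqP => [->|/eqP J0].
    rewrite (avg_ext (G := fun _ => 1)) ?(avg_const (0 : {ffun 'I_t -> 'rV['F_2]_n})) //.
    by move=> x; rewrite /term big1 // => e _; rewrite inE.
  case: (boolP (J \subset E)) => [JE|/subsetPn [e eJ eE]].
    have := key hE hf JE J0.
    rewrite (avg_ext (G := term J)); first by move/(le_trans (ler_norm _)).
    move=> x; rewrite /term [LHS]big_mkcond /=; apply: eq_bigr => e _.
    by case: (boolP (e \in J)) => // eJ; rewrite (subsetP JE e eJ).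
  rewrite (avg_ext (G := fun _ => 0)) ?(avg_const (0 : {ffun 'I_t -> 'rV['F_2]_n})) //.
  by move=> x; rewrite /term (bigD1 e) //= eJ (negbTE eE) mul0r.
have hsum : \sum_(J : {set {set 'I_t}}) b J = 1 + U * (P - 1).
  rewrite (bigD1 set0) //= /b eqxx; congr (_ + _).
  transitivity (\sum_(J : {set {set 'I_t}} | J != set0) (if J \subset E then U else 0)).
    by apply: eq_bigr => J /negbTE ->.
  rewrite -big_mkcondr /=.
  rewrite (eq_bigl (fun J => J \in powerset E :\ set0)); last first.
    by move=> J; rewrite in_setD1 powersetE.
  rewrite sumr_const -mulr_natr; congr (_ * _).
  have := cardsD1 set0 (powerset E); rewrite card_powerset powersetE sub0set add1n.
  by rewrite /P natexp2 => ->; rewrite -addn1 natrD addrK.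
rewrite hprob.
have hle : \sum_(J : {set {set 'I_t}}) avg (term J) <= 1 + U * (P - 1).
  by rewrite -hsum; apply: ler_sum => J _; apply: hb.
have hPi : P^-1 * P = 1 by rewrite mulVf // gt_eqF.
have hPi0 : 0 < P^-1 by rewrite invr_gt0.
apply: le_trans (ler_wpM2l (ltW hPi0) hle) _.
rewrite mulrDr mulr1 lerD2l mulrCA mulrBr hPi mulr1 mulrBr mulr1.
by rewrite lerBlDr lerDl mulr_ge0 // ltW.
Qed.
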